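(* Let $m,n$ be coprime positive integers with $\sqrt3 < m/n \le 3$, let $p = m^2-3n^2$, $r = 2mn$, $q = m^2+3n^2$, and let $\theta\in[\pi/3,\pi/2)$ be the angle with $\cos\theta = p/q$, $\sin\theta = \frac{r}{q}\sqrt3$. Then the lattice $$\Omega_\theta = \begin{bmatrix} m & m \\ n\sqrt3 & -n\sqrt3\end{bmatrix}\mathbb{Z}^2$$ belongs to $\mathrm{WR}(\Lambda_h)$, and satisfies $|\Omega_\theta| = q$, $\det(\Omega_\theta) = r\sqrt3$, $|\Lambda_h:\Omega_\theta| = 2r$, and $\Omega_\theta \in C_h(\theta)$. Hence $C_h(\theta)$ is the set of all lattices in $\mathrm{WR}(\Lambda_h)$ similar to $\Omega_\theta$.
   Context: $\Lambda_h = \begin{bmatrix} 1 & -1/2 \\ 0 & \sqrt3/2\end{bmatrix}\mathbb{Z}^2$ is the hexagonal lattice. For a full-rank lattice $\Gamma = A\mathbb{Z}^2\subset\mathbb{R}^2$, $\det\Gamma = |\det A|$, $|\Gamma| = \min\{\|y\|^2 : y\in\Gamma\setminus\{0\}\}$, and for $\Gamma\subseteq\Lambda_h$, $|\Lambda_h:\Gamma| = \det\Gamma/\det\Lambda_h$. $\Gamma$ is well-rounded (WR) if it has a basis of vectors of squared norm $|\Gamma|$ (a minimal basis); such a basis can be chosen with angle in $[\pi/3,\pi/2]$ between its vectors, and this angle $\theta(\Gamma)$ is an invariant of $\Gamma$. $\mathrm{WR}(\Lambda_h)$ is the set of full-rank WR sublattices of $\Lambda_h$, and $C_h(\theta) =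 \{\Omega\in\mathrm{WR}(\Lambda_h) : \theta(\Omega)=\theta\}$. Lattices $\Gamma_1,\Gamma_2$ are similar if $\Gamma_2=\alpha A\Gamma_1$ for some nonzero real $\alpha$ and $A\in O_2(\mathbb{R})$. *)

(* Defs.v *)
From Stdlib Require Import Reals ZArith Arith.
Open Scope R_scope.

Definition pt := (R * R)%type.

(* B Z^2 where B has columns b1, b2 *)
Definition lat_span (b1 b2 : pt) : pt -> Prop :=
  fun z => exists k l : Z,
    z = (IZR k * fst b1 + IZR l * fst b2, IZR k * snd b1 + IZR l * snd b2).

Definition det2 (b1 b2 : pt) : R := fst b1 * snd b2 - snd b1 * fst b2.
Definition dot (x y : pt) : R := fst x * fst y + snd x * snd y.
Definition norm2 (x : pt) : R := dot x x.
Definition origin : pt := (0, 0).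

Definition is_basis (G : pt -> Prop) (b1 b2 : pt) : Prop :=
  det2 b1 b2 <> 0 /\ forall z, G z <-> lat_span b1 b2 z.

Definition full_lattice (G : pt -> Prop) : Prop :=
  exists b1 b2, is_basis G b1 b2.

(* det G = d : G is a full-rank lattice and |det A| = d for every
   (equivalently, some) matrix A with G = A Z^2 *)
Definition lattice_det (G : pt -> Prop) (d : R) : Prop :=
  full_lattice G /\ forall b1 b2, is_basis G b1 b2 -> Rabs (det2 b1 b2) = d.

(* |G| = mn : minimum of squared norms of nonzero vectors of G *)
Definition lattice_min (G : pt -> Prop) (mn : R) : Prop :=
  (exists y, G y /\ y <> origin /\ norm2 y = mn) /\
  (forall y, G y -> y <> origin -> mn <= norm2 y).

Definition minimal_basis (G : pt -> Prop) (b1 b2 : pt) : Prop :=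
  is_basis G b1 b2 /\ exists mn, lattice_min G mn /\ norm2 b1 = mn /\ norm2 b2 = mn.

Definition well_rounded (G : pt -> Prop) : Prop :=
  full_lattice G /\ exists b1 b2, minimal_basis G b1 b2.

Definition Lambda_h : pt -> Prop := lat_span (1, 0) (-(1/2), sqrt 3 / 2).

Definition sublattice (G H : pt -> Prop) : Prop := forall z, G z -> H z.

Definition WR_h (G : pt -> Prop) : Prop := sublattice G Lambda_h /\ well_rounded G.

Definition index_h (G : pt -> Prop) (k : R) : Prop :=
  sublattice G Lambda_h /\
  exists dG dL, lattice_det G dG /\ lattice_det Lambda_h dL /\ k = dG / dL.

(* theta(G) = th : G has a minimal basis whose vectors form the angle th,
   with th in [pi/3, pi/2] (the angle between nonzero vectors x, y is the
   t in [0, pi] with cos t = <x,y>/(|x||y|)) *)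
Definition wr_angle (G : pt -> Prop) (th : R) : Prop :=
  PI / 3 <= th <= PI / 2 /\
  exists b1 b2, minimal_basis G b1 b2 /\
    dot b1 b2 = cos th * (sqrt (norm2 b1) * sqrt (norm2 b2)).

Definition C_h (th : R) (G : pt -> Prop) : Prop := WR_h G /\ wr_angle G th.

Definition similar (G1 G2 : pt -> Prop) : Prop :=
  exists alpha a b c d : R,
    alpha <> 0 /\ a * a + c * c = 1 /\ b * b + d * d = 1 /\ a * b + c * d = 0 /\
    forall z, G2 z <-> exists y, G1 y /\
      z = (alpha * (a * fst y + b * snd y), alpha * (c * fst y + d * snd y)).

Definition Omega (m n : nat) : pt -> Prop :=
  lat_span (INR m, INR n * sqrt 3) (INR m, - (INR n * sqrt 3)).

(* Main.v *)
Require Import Defs.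
From Stdlib Require Import Reals ZArith Arith Lia Lra.
Open Scope R_scope.

Lemma span_self1 (b1 b2 : pt) : lat_span b1 b2 b1.
Proof. exists 1%Z, 0%Z. destruct b1, b2; simpl; f_equal; ring. Qed.
Lemma span_self2 (b1 b2 : pt) : lat_span b1 b2 b2.
Proof. exists 0%Z, 1%Z. destruct b1, b2; simpl; f_equal; ring. Qed.

Lemma det_comb (b1 b2 : pt) k1 l1 k2 l2 :
  det2 (IZR k1 * fst b1 + IZR l1 * fst b2, IZR k1 * snd b1 + IZR l1 * snd b2)
       (IZR k2 * fst b1 + IZR l2 * fst b2, IZR k2 * snd b1 + IZR l2 * snd b2)
  = IZR (k1 * l2 - l1 * k2) * det2 b1 b2.
Proof. unfold det2; simpl. rewrite minus_IZR, !mult_IZR. ring. Qed.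

Lemma basis_det_eq G b1 b2 c1 c2 :
  is_basis G b1 b2 -> is_basis G c1 c2 -> Rabs (det2 c1 c2) = Rabs (det2 b1 b2).
Proof.
  intros [Hb HG] [Hc HG'].
  assert (E1 : lat_span b1 b2 c1) by (apply HG, HG', span_self1).
  assert (E2 : lat_span b1 b2 c2) by (apply HG, HG', span_self2).
  assert (F1 : lat_span c1 c2 b1) by (apply HG', HG, span_self1).
  assert (F2 : lat_span c1 c2 b2) by (apply HG', HG, span_self2).
  destruct E1 as [k1 [l1 E1]]. destruct E2 as [k2 [l2 E2]].
  destruct F1 as [u1 [v1 F1]]. destruct F2 as [u2 [v2 F2]].
  assert (Dc : det2 c1 c2 = IZR (k1 * l2 - l1 * k2) * det2 b1 b2)
    by (rewrite E1, E2; apply det_comb).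
  assert (Db : det2 b1 b2 = IZR (u1 * v2 - v1 * u2) * det2 c1 c2)
    by (rewrite F1 at 1; rewrite F2 at 1; apply det_comb).
  set (D := (k1 * l2 - l1 * k2)%Z) in *.
  set (D' := (u1 * v2 - v1 * u2)%Z) in *.
  assert (H1 : IZR (D * D') = 1).
  { rewrite mult_IZR. apply Rmult_eq_reg_r with (det2 b1 b2); auto.
    rewrite Rmult_1_l. rewrite Db at 2. rewrite Dc. ring. }
  apply eq_IZR in H1. apply Z.eq_mul_1 in H1.
  rewrite Dc, Rabs_mult. destruct H1 as [H1|H1]; rewrite H1.
  - rewrite Rabs_R1; ring.
  - replace (IZR (- (1))) with (-1) by (simpl; lra). rewrite Rabs_left by lra; ring.
Qed.

Lemma lattice_det_basis G b1 b2 d :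
  is_basis G b1 b2 -> Rabs (det2 b1 b2) = d -> lattice_det G d.
Proof.
  intros Hb Hd. split. exists b1, b2; auto.
  intros c1 c2 Hc. rewrite <- Hd. eapply basis_det_eq; eauto.
Qed.

Definition fmap (al a b c d : R) (y : pt) : pt :=
  (al * (a * fst y + b * snd y), al * (c * fst y + d * snd y)).

Lemma lin_span al a b c d o1 o2 b1 b2 :
  fmap al a b c d o1 = b1 -> fmap al a b c d o2 = b2 ->
  forall z, lat_span b1 b2 z <-> exists y, lat_span o1 o2 y /\ z = fmap al a b c d y.
Proof.
  intros H1 H2 z. subst b1 b2. split.
  - intros [k [l E]]. exists (IZR k * fst o1 + IZR l * fst o2, IZR k * snd o1 + IZR l * snd o2).
    split. exists k, l; reflexivity.
    rewrite E. unfold fmap; simpl. f_equal; ring.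
  - intros [y [[k [l E]] Ez]]. exists k, l. rewrite Ez, E. unfold fmap; simpl. f_equal; ring.
Qed.

Lemma norm_fmap al a b c d y :
  a * a + c * c = 1 -> b * b + d * d = 1 -> a * b + c * d = 0 ->
  norm2 (fmap al a b c d y) = al * al * norm2 y.
Proof.
  intros h1 h2 h3. unfold norm2, dot, fmap; simpl.
  transitivity (al*al*((a*a+c*c)*(fst y*fst y) + (b*b+d*d)*(snd y*snd y) + 2*(a*b+c*d)*(fst y*snd y))).
  ring. rewrite h1, h2, h3. ring.
Qed.

Lemma dot_fmap al a b c d x y :
  a * a + c * c = 1 -> b * b + d * d = 1 -> a * b + c * d = 0 ->
  dot (fmap al a b c d x) (fmap al a b c d y) = al * al * dot x y.
Proof.
  intros h1 h2 h3. unfold dot, fmap; simpl.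
  transitivity (al*al*((a*a+c*c)*(fst x*fst y) + (b*b+d*d)*(snd x*snd y) + (a*b+c*d)*(fst x*snd y + snd x * fst y))).
  ring. rewrite h1, h2, h3. ring.
Qed.

Lemma det_fmap al a b c d x y :
  det2 (fmap al a b c d x) (fmap al a b c d y) = al * al * (a*d - b*c) * det2 x y.
Proof. unfold det2, fmap; simpl. ring. Qed.

Lemma norm_pos y : y <> origin -> 0 < norm2 y.
Proof.
  destruct y as [x1 x2]. unfold norm2, dot, origin; simpl. intros H.
  destruct (Req_dec x1 0); destruct (Req_dec x2 0); subst; try (exfalso; now apply H).
  all: try nra.
Qed.

Lemma s3sq : sqrt 3 * sqrt 3 = 3.
Proof. apply sqrt_sqrt; lra. Qed.
Lemma s3pos : 0 < sqrt 3.
Proof. apply sqrt_lt_R0; lra. Qed.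

Lemma omega_min M N : 0 < M -> 0 < N -> 3 * N^2 < M^2 -> M <= 3 * N ->
  lattice_min (lat_span (M, N * sqrt 3) (M, - (N * sqrt 3))) (M^2 + 3 * N^2).
Proof.
  intros HM HN H1 H2. pose proof s3sq as S. split.
  - exists (M, N * sqrt 3). split. apply span_self1. split.
    + unfold origin; intros E; injection E; lra.
    + unfold norm2, dot; simpl. nra.
  - intros y [k [l E]] Hy. subst y.
    assert (Ey : norm2 (IZR k * fst (M, N * sqrt 3) + IZR l * fst (M, - (N * sqrt 3)),
      IZR k * snd (M, N * sqrt 3) + IZR l * snd (M, - (N * sqrt 3)))
      = IZR ((k+l)*(k+l)) * M^2 + IZR ((k-l)*(k-l)) * (3 * N^2)).
    { unfold norm2, dot; simpl. rewrite !mult_IZR, plus_IZR, minus_IZR.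
      transitivity ((IZR k + IZR l)*(IZR k + IZR l) * M^2 + (IZR k - IZR l)*(IZR k - IZR l) * ((sqrt 3 * sqrt 3) * N^2)).
      ring. rewrite S. ring. }
    rewrite Ey.
    assert (HMN : M^2 <= 9 * N^2) by nra.
    destruct (Z.eq_dec (k+l) 0) as [Ha|Ha]; destruct (Z.eq_dec (k-l) 0) as [Hb|Hb].
    + exfalso. apply Hy. assert (k = 0%Z) by lia. assert (l = 0%Z) by lia. subst.
      unfold origin; simpl. f_equal; ring.
    + assert (4 <= IZR ((k-l)*(k-l))) by (apply IZR_le; nia).
      assert (IZR ((k+l)*(k+l)) = 0) by (rewrite Ha; reflexivity). nra.
    + assert (4 <= IZR ((k+l)*(k+l))) by (apply IZR_le; nia).
      assert (IZR ((k-l)*(k-l)) = 0) by (rewrite Hb; reflexivity). nra.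
    + assert (1 <= IZR ((k+l)*(k+l))) by (apply IZR_le; nia).
      assert (1 <= IZR ((k-l)*(k-l))) by (apply IZR_le; nia). nra.
Qed.

Theorem lemma3p2 (m n : nat) (th : R) :
  (0 < m)%nat -> (0 < n)%nat -> Nat.gcd m n = 1%nat ->
  sqrt 3 < INR m / INR n <= 3 ->
  PI / 3 <= th < PI / 2 ->
  cos th = (INR m ^ 2 - 3 * INR n ^ 2) / (INR m ^ 2 + 3 * INR n ^ 2) ->
  sin th = (2 * INR m * INR n) / (INR m ^ 2 + 3 * INR n ^ 2) * sqrt 3 ->
  WR_h (Omega m n) /\
  lattice_min (Omega m n) (INR m ^ 2 + 3 * INR n ^ 2) /\
  lattice_det (Omega m n) (2 * INR m * INR n * sqrt 3) /\
  index_h (Omega m n) (2 * (2 * INR m * INR n)) /\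
  C_h th (Omega m n) /\
  (forall G : pt -> Prop, C_h th G <-> (WR_h G /\ similar (Omega m n) G)).
Proof.
  intros hm hn _ [hr1 hr2] hth hcos _.
  pose proof s3sq as S. pose proof s3pos as S0.
  assert (HM : 0 < INR m) by (apply lt_0_INR; lia).
  assert (HN : 0 < INR n) by (apply lt_0_INR; lia).
  unfold Omega.
  set (M := INR m) in *. set (N := INR n) in *.
  assert (HMN1 : sqrt 3 * N < M).
  { apply Rmult_lt_compat_r with (r := N) in hr1; auto.
    unfold Rdiv in hr1. rewrite Rmult_assoc, Rinv_l in hr1; lra. }
  assert (HMN2 : M <= 3 * N).
  { apply Rmult_le_compat_r with (r := N) in hr2; try lra.
    unfold Rdiv in hr2. rewrite Rmult_assoc, Rinv_l in hr2; lra. }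
  assert (H3 : 3 * N^2 < M^2).
  { assert (E : sqrt 3 * N * (sqrt 3 * N) = 3 * N^2) by (transitivity (sqrt 3 * sqrt 3 * N^2); [ring | rewrite S; ring]).
    assert (0 < sqrt 3 * N) by (apply Rmult_lt_0_compat; lra). nra. }
  assert (Hq : 0 < M^2 + 3 * N^2) by nra.
  assert (HbO : is_basis (lat_span (M, N * sqrt 3) (M, - (N * sqrt 3))) (M, N * sqrt 3) (M, - (N * sqrt 3))).
  { split. unfold det2; simpl. intro E. assert (0 < M * N * sqrt 3).
    apply Rmult_lt_0_compat; try apply Rmult_lt_0_compat; lra. nra. tauto. }
  pose proof (omega_min M N HM HN H3 HMN2) as Hmin.
  assert (No1 : norm2 (M, N * sqrt 3) = M^2 + 3 * N^2)
    by (unfold norm2, dot; simpl; transitivity (M^2 + sqrt 3 * sqrt 3 * N^2); [ring | rewrite S; ring]).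
  assert (No2 : norm2 (M, - (N * sqrt 3)) = M^2 + 3 * N^2)
    by (unfold norm2, dot; simpl; transitivity (M^2 + sqrt 3 * sqrt 3 * N^2); [ring | rewrite S; ring]).
  assert (Do : dot (M, N * sqrt 3) (M, - (N * sqrt 3)) = M^2 - 3 * N^2)
    by (unfold dot; simpl; transitivity (M^2 - sqrt 3 * sqrt 3 * N^2); [ring | rewrite S; ring]).
  assert (HmbO : minimal_basis (lat_span (M, N * sqrt 3) (M, - (N * sqrt 3))) (M, N * sqrt 3) (M, - (N * sqrt 3))).
  { split; auto. exists (M^2 + 3 * N^2); auto. }
  assert (Hsub : sublattice (lat_span (M, N * sqrt 3) (M, - (N * sqrt 3))) Lambda_h).
  { intros z [k [l E]]. subst z.
    exists (k * (Z.of_nat m + Z.of_nat n) + l * (Z.of_nat m - Z.of_nat n))%Z,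
           (2 * Z.of_nat n * k - 2 * Z.of_nat n * l)%Z.
    rewrite minus_IZR, plus_IZR, !mult_IZR, plus_IZR, minus_IZR, <- !INR_IZR_INZ.
    fold M N. simpl. f_equal; field. }
  assert (HWR : WR_h (lat_span (M, N * sqrt 3) (M, - (N * sqrt 3)))).
  { split; auto. split. exists (M, N * sqrt 3), (M, - (N * sqrt 3)); auto.
    exists (M, N * sqrt 3), (M, - (N * sqrt 3)); auto. }
  assert (Hang : wr_angle (lat_span (M, N * sqrt 3) (M, - (N * sqrt 3))) th).
  { split. lra. exists (M, N * sqrt 3), (M, - (N * sqrt 3)). split; auto.
    rewrite No1, No2, sqrt_sqrt, hcos, Do by lra. field. lra. }
  split; [auto|]. split; [auto|].
  split.
  { apply (lattice_det_basis _ _ _ _ HbO). unfold det2; simpl.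
    rewrite Rabs_left. ring. assert (0 < M * N * sqrt 3).
    apply Rmult_lt_0_compat; try apply Rmult_lt_0_compat; lra. nra. }
  split.
  { split; auto. exists (2 * M * N * sqrt 3), (sqrt 3 / 2). split.
    { apply (lattice_det_basis _ _ _ _ HbO). unfold det2; simpl.
      rewrite Rabs_left. ring. assert (0 < M * N * sqrt 3).
      apply Rmult_lt_0_compat; try apply Rmult_lt_0_compat; lra. nra. }
    split.
    { apply (lattice_det_basis _ (1, 0) (-(1/2), sqrt 3 / 2)).
      split. unfold det2; simpl. lra. tauto.
      unfold det2; simpl. rewrite Rabs_right; lra. }
    field. lra. }
  split. { split; auto. }
  intros G. split.
  - intros [HW [Hth [b1 [b2 [[HbG [mn [Hmn [N1 N2]]]] Hdot]]]]].
    split; auto.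
    assert (Hmp : 0 < mn).
    { destruct Hmn as [[y [_ [Hy E]]] _]. rewrite <- E. apply norm_pos; auto. }
    rewrite N1, N2, sqrt_sqrt, hcos in Hdot by lra.
    set (al := sqrt (mn / (M^2 + 3 * N^2))).
    assert (Hal : al * al = mn / (M^2 + 3 * N^2)).
    { apply sqrt_sqrt. apply Rlt_le, Rdiv_lt_0_compat; lra. }
    assert (Hal0 : 0 < al).
    { apply sqrt_lt_R0, Rdiv_lt_0_compat; lra. }
    destruct b1 as [x1 y1]. destruct b2 as [x2 y2].
    unfold norm2, dot in N1, N2, Hdot; simpl in N1, N2, Hdot.
    set (a := (x1 + x2) / (2 * M * al)).
    set (b := (x1 - x2) / (2 * N * sqrt 3 * al)).
    set (c := (y1 + y2) / (2 * M * al)).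
    set (d := (y1 - y2) / (2 * N * sqrt 3 * al)).
    assert (h1 : a * a + c * c = 1).
    { replace (a * a + c * c) with ((x1*x1+y1*y1 + (x2*x2+y2*y2) + 2*(x1*x2+y1*y2))/(4*M^2*(al*al)))
        by (unfold a, c; field; lra).
      rewrite N1, N2, Hdot, Hal. field. lra. }
    assert (h2 : b * b + d * d = 1).
    { replace (b * b + d * d) with ((x1*x1+y1*y1 + (x2*x2+y2*y2) - 2*(x1*x2+y1*y2))/(4*N^2*(sqrt 3 * sqrt 3)*(al*al)))
        by (unfold b, d; field; lra).
      rewrite N1, N2, Hdot, Hal, S. field. lra. }
    assert (h3 : a * b + c * d = 0).
    { replace (a * b + c * d) with ((x1*x1+y1*y1 - (x2*x2+y2*y2))/(4*M*N*sqrt 3*(al*al)))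
        by (unfold a, b, c, d; field; lra).
      rewrite N1, N2. field. lra. }
    assert (F1 : fmap al a b c d (M, N * sqrt 3) = (x1, y1)).
    { unfold fmap, a, b, c, d; simpl. f_equal; field; lra. }
    assert (F2 : fmap al a b c d (M, - (N * sqrt 3)) = (x2, y2)).
    { unfold fmap, a, b, c, d; simpl. f_equal; field; lra. }
    exists al, a, b, c, d. split. lra. split; auto. split; auto. split; auto.
    intros z. pose proof (lin_span _ _ _ _ _ _ _ _ _ F1 F2 z) as L.
    destruct HbG as [_ HbG]. specialize (HbG z). unfold fmap in L. tauto.
  - intros [HW [al [a [b [c [d [Hal [h1 [h2 [h3 Hz]]]]]]]]]].
    split; auto. split. lra.
    set (f := fmap al a b c d).
    assert (Hz' : forall z, G z <-> lat_span (f (M, N * sqrt 3)) (f (M, - (N * sqrt 3))) z).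
    { intros z. pose proof (lin_span al a b c d (M, N * sqrt 3) (M, - (N * sqrt 3)) _ _ eq_refl eq_refl z) as L.
      specialize (Hz z). unfold f, fmap in *. tauto. }
    assert (Hdet : (a*d - b*c) * (a*d - b*c) = 1).
    { transitivity ((a*a+c*c)*(b*b+d*d) - (a*b+c*d)*(a*b+c*d)). ring.
      rewrite h1, h2, h3. ring. }
    assert (HbG : is_basis G (f (M, N * sqrt 3)) (f (M, - (N * sqrt 3)))).
    { split; auto. unfold f. rewrite det_fmap.
      destruct HbO as [HO _].
      assert (a*d - b*c <> 0) by (intro E; rewrite E in Hdet; lra).
      repeat apply Rmult_integral_contrapositive_currified; auto. }
    assert (Hall : 0 < al * al) by nra.
    assert (HminG : lattice_min G (al * al * (M^2 + 3 * N^2))).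
    { split.
      - exists (f (M, N * sqrt 3)). split. apply Hz', span_self1.
        unfold f. rewrite norm_fmap, No1 by auto. split; auto.
        intro E. assert (Z := norm_fmap al a b c d (M, N * sqrt 3) h1 h2 h3).
        rewrite E, No1 in Z. unfold norm2, dot, origin in Z; simpl in Z. nra.
      - intros y Hy Hy0. apply Hz in Hy. destruct Hy as [y' [Hy' Ey]].
        assert (y' <> origin).
        { intro E. apply Hy0. rewrite Ey, E. unfold origin; simpl. f_equal; ring. }
        assert (E2 : norm2 y = al * al * norm2 y').
        { rewrite Ey. apply (norm_fmap al a b c d y' h1 h2 h3). }
        rewrite E2. apply Rmult_le_compat_l. lra.
        destruct Hmin as [_ Hm]. apply Hm; auto. }
    exists (f (M, N * sqrt 3)), (f (M, - (N * sqrt 3))). split.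
    + split; auto. exists (al * al * (M^2 + 3 * N^2)). split; auto.
      unfold f; rewrite !norm_fmap, No1, No2 by auto. split; reflexivity.
    + unfold f. rewrite dot_fmap, !norm_fmap, No1, No2, Do, sqrt_sqrt, hcos by (auto; nra).
      field. lra.
Qed.
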